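(* Let $P$ be a positive event pattern and $I$ an event stream, and let $G=(V,\mathcal{E})$ be the GRETA graph of $P$ and $I$. Call a vertex a START vertex if its type is $start(P)$ and an END vertex if its type is $end(P)$. Then the set of event sequences $(v_0,v_1,\dots,v_m)$ ($m \ge 0$) that form directed paths in $G$ from a START vertex $v_0$ to an END vertex $v_m$ is equal to the set of event trends matched by $P$ in $I$; that is, for each such path there is a trend consisting of the same events in the same order, and vice versa.
   Context: Events: each event $e$ has an event type $e.type$ and an occurrence time $e.time \in \mathbb{Q}_{\ge 0}$. An event stream $I$ is a finite collection of distinct events arriving in nondecreasing order of time. Positive patterns: an event type $E$ is a pattern; if $P_i,P_j$ are patterns then $P_i+$ and $\mathsf{SEQ}(P_i,P_j)$ are patterns; each event type occurs at most once in a pattern. Matches over $I$: $matches(E)=\{(e): e\in I, e.type=E\}$; $(e_1,\dots,e_k)\in matches(\mathsf{SEQ}(P_i,P_j))$ iff for some $1\le m\le k$, $(e_1,\dots,e_m)\in matches(P_i)$, $(e_{m+1},\dots,e_k)\in matches(P_j)$ and $e_1.time<e_2.time<\dots<e_k.time$; $matches(P_i+)$ consists of concatenations $s_1\cdots s_k$ ($k\ge1$) with each $s_l\in matches(P_i)$ and the last event of $s_l$ strictly earlier than the first event of $s_{l+1}$. The event trends matched by $P$ in $I$ are the elements of $matches(P)$. Define $start(E)=end(E)=E$, $start(P_i+)=start(P_i)$, $end(P_i+)=end(P_i)$, $start(\mathsf{SEQ}(P_i,P_j))=start(P_i)$, $end(\mathsf{SEQ}(P_i,P_j))=end(P_j)$.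 The GRETA graph $G=(V,\mathcal{E})$ of $P$ and $I$ is the directed graph whose vertices are the events of $I$ that occur in at least one trend matched by $P$ in $I$, with an edge $(e_i,e_j)$ iff $e_i$ and $e_j$ are consecutive (adjacent) events, in this order, in some trend matched by $P$ in $I$. A path may consist of a single vertex. *)

(* Defs.v *)
From mathcomp Require Import all_boot all_order all_algebra.
Set Implicit Arguments. Unset Strict Implicit. Unset Printing Implicit Defensive.
Import Order.TTheory GRing.Theory Num.Theory.
Local Open Scope ring_scope.

Inductive pattern (T : Type) : Type :=
| PAtom of T
| PPlus of pattern T
| PSeq of pattern T & pattern T.

Fixpoint ptypes (T : Type) (P : pattern T) : seq T :=
  match P with
  | PAtom a => [:: a]
  | PPlus P1 => ptypes P1
  | PSeq P1 P2 => ptypes P1 ++ ptypes P2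
  end.

Definition wf_pattern (T : eqType) (P : pattern T) : bool := uniq (ptypes P).

Fixpoint pstart (T : Type) (P : pattern T) : T :=
  match P with
  | PAtom a => a
  | PPlus P1 => pstart P1
  | PSeq P1 _ => pstart P1
  end.

Fixpoint pend (T : Type) (P : pattern T) : T :=
  match P with
  | PAtom a => a
  | PPlus P1 => pend P1
  | PSeq _ P2 => pend P2
  end.

Section Matches.
Variables (T E : eqType) (etype : E -> T) (etime : E -> rat).

Definition valid_stream (I : seq E) : Prop :=
  [/\ uniq I, sorted (fun x y => etime x <= etime y) I
    & forall e, e \in I -> 0 <= etime e].

Definition seg_before (a b : seq E) : bool :=
  match ohead (rev a), ohead b with
  | Some x, Some y => etime x < etime y
  | _, _ => false
  end.

Fixpoint matches (I : seq E) (P : pattern T) (s : seq E) : Prop :=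
  match P with
  | PAtom a => exists e, [/\ s = [:: e], e \in I & etype e = a]
  | PSeq P1 P2 => exists s1 s2,
      [/\ s = s1 ++ s2, matches I P1 s1, matches I P2 s2
        & sorted (fun x y => etime x < etime y) s]
  | PPlus P1 => exists ss : seq (seq E),
      [/\ ss != [::], s = flatten ss,
          (forall x, x \in ss -> matches I P1 x)
        & sorted seg_before ss]
  end.

Definition greta_vertex (I : seq E) (P : pattern T) (e : E) : Prop :=
  exists s, matches I P s /\ e \in s.

Definition greta_edge (I : seq E) (P : pattern T) (e1 e2 : E) : Prop :=
  exists s1 s2, matches I P (s1 ++ e1 :: e2 :: s2).

Fixpoint prop_path (r : E -> E -> Prop) (x : E) (s : seq E) : Prop :=
  match s with
  | [::] => True
  | y :: s' => r x y /\ prop_path r y s'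
  end.

Definition start_end_path (I : seq E) (P : pattern T) (s : seq E) : Prop :=
  exists v0 rest, [/\ s = v0 :: rest,
    (forall v, v \in s -> greta_vertex I P v),
    prop_path (greta_edge I P) v0 rest,
    etype v0 = pstart P
  & etype (last v0 rest) = pend P].

End Matches.

(* Main.v *)
Require Import Defs.
From mathcomp Require Import all_boot all_order all_algebra.

Set Implicit Arguments. Unset Strict Implicit. Unset Printing Implicit Defensive.
Import Order.TTheory GRing.Theory Num.Theory.

Section Aux.
Variables (T E : eqType) (etype : E -> T) (etime : E -> rat).
Local Open Scope ring_scope.

Fixpoint followb (P : pattern T) (a b : T) : bool :=
  match P with
  | PAtom _ => false
  | PPlus P1 => followb P1 a b || (a == pend P1) && (b == pstart P1)
  | PSeq P1 P2 => [|| followb P1 a b, followb P2 a b | (a == pend P1) && (b == pstart P2)]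
  end.

Definition rP P : rel E := fun x y => followb P (etype x) (etype y) && (etime x < etime y).

Definition segrel (r : rel E) (a b : seq E) : bool :=
  match ohead (rev a), ohead b with Some x, Some y => r x y | _, _ => false end.

Lemma ohead_rev (y : E) u : ohead (rev (y :: u)) = Some (last y u).
Proof. by case/lastP: u => [|u z] //; rewrite -rcons_cons rev_rcons last_rcons. Qed.

Lemma pstart_in (P : pattern T) : pstart P \in ptypes P.
Proof.
by elim: P => [a|P IH|P1 IH1 P2 IH2] /=; rewrite ?mem_seq1 ?mem_cat ?IH ?IH1 ?IH2 ?orbT.
Qed.

Lemma pend_in (P : pattern T) : pend P \in ptypes P.
Proof.
by elim: P => [a|P IH|P1 IH1 P2 IH2] /=; rewrite ?mem_seq1 ?mem_cat ?IH ?IH1 ?IH2 ?orbT.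
Qed.

Lemma follow_in (P : pattern T) a b : followb P a b -> (a \in ptypes P) && (b \in ptypes P).
Proof.
elim: P => [c|P IH|P1 IH1 P2 IH2] //=.
- case/orP => [/IH //| /andP[/eqP-> /eqP->]]; by rewrite pend_in pstart_in.
- rewrite !mem_cat; case/or3P => [/IH1/andP[->->]//|/IH2/andP[->->]|/andP[/eqP-> /eqP->]];
  by rewrite ?pend_in ?pstart_in ?orbT.
Qed.

Lemma all_flatten (a : pred E) w ss : w \in ss -> all a (flatten ss) -> all a w.
Proof.
elim: ss => // w' ss IH; rewrite inE /= all_cat => /orP[/eqP->|/IH H] /andP[h1 h2] //.
exact: H.
Qed.

Lemma sound I (P : pattern T) s : matches etype etime I P s ->
  exists x s', [/\ s = x :: s', all (fun v => v \in I) s, etype x = pstart P,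
    etype (last x s') = pend P & path (rP P) x s'].
Proof.
elim: P s => [a|P IH|P1 IH1 P2 IH2] s /=.
- case=> e [-> eI ea]; exists e, [::]; by rewrite /= eI.
- case=> ss [ss0 -> allm srt].
  elim: ss ss0 allm srt => // t ss IHss _ allm srt.
  have [y [u [tE yI ys yl pu]]] := IH t (allm t (mem_head _ _)).
  have pu' : path (rP (PPlus P)) y u.
    by apply: sub_path pu => a b; rewrite /rP /= => /andP[-> ->].
  case: ss IHss allm srt => [|t' ss] IHss allm srt.
    by exists y, u; rewrite /= cats0 tE; split => //; rewrite -tE.
  have allm' : forall x, x \in t' :: ss -> matches etype etime I P x.
    by move=> x xi; apply: allm; rewrite inE xi orbT.
  have := IHss isT allm' (path_sorted srt).
  case=> [x [s' [fe fI fx fl fp]]].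
  have [z [w [t'E _ _ _ _]]] := IH t' (allm' t' (mem_head _ _)).
  subst t t'.
  have zx : z = x by move: fe => /= [].
  subst z.
  move: srt => /= /andP[sb _].
  move: sb; rewrite /seg_before ohead_rev /= => sb.
  exists y, (u ++ x :: s'); rewrite /=.
  split => //.
  + by rewrite /= -fe.
  + by rewrite all_cat; move: yI fI => /= /andP[-> ->] ->.
  + by rewrite last_cat.
  + by rewrite cat_path pu' /= fp andbT /rP /= yl fx !eqxx sb orbT.
- case=> s1 [s2 [-> m1 m2 srt]].
  have [x1 [t1 [e1 a1 h1 l1 p1]]] := IH1 _ m1.
  have [x2 [t2 [e2 a2 h2 l2 p2]]] := IH2 _ m2.
  subst s1 s2.
  exists x1, (t1 ++ x2 :: t2); split => //.
  + by rewrite all_cat a1 a2.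
  + by rewrite last_cat.
  + move: srt; rewrite /= cat_path /= => /and3P[_ lt _].
    rewrite cat_path; apply/andP; split.
      by apply: sub_path p1 => a b; rewrite /rP /= => /andP[-> ->].
    rewrite /= {1}/rP /= l1 h2 !eqxx lt !orbT /=.
    by apply: sub_path p2 => a b; rewrite /rP /= => /andP[-> ->]; rewrite orbT.
Qed.

Lemma plus_split (r1 r2 : rel E) (h l : pred E) x s :
  (forall a b, r2 a b -> l a && h b) ->
  path (fun a b => r1 a b || r2 a b) x s -> l (last x s) ->
  exists t rest, [/\ x :: s = (x :: t) ++ flatten rest, path r1 x t, l (last x t),
     (forall w, w \in rest -> exists y u, [/\ w = y :: u, h y, l (last y u) & path r1 y u])
     & sorted (segrel r2) ((x :: t) :: rest)].
Proof.
move=> H2; elim: s x => [|y s IH] x /=.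
  by move=> _ lx; exists [::], [::]; split.
case/andP => /orP[r1xy|r2xy] p ls.
- have [t [rest [e pt lt hr sr]]] := IH y p ls.
  exists (y :: t), rest; split => //=.
  + by rewrite e.
  + by rewrite r1xy.
  + case: rest sr {e hr} => //= w rest /andP[sw ->]; rewrite andbT.
    by move: sw; rewrite /segrel !ohead_rev.
- have [t [rest [e pt lt hr sr]]] := IH y p ls.
  exists [::], ((y::t)::rest); split => //=.
  + by rewrite e.
  + by case/andP: (H2 _ _ r2xy).
  + move=> w; rewrite inE => /orP[/eqP->|/hr //]; exists y, t; split => //.
    by case/andP: (H2 _ _ r2xy).
  + by rewrite [path _ _ _]sr andbT /segrel ohead_rev.
Qed.

Lemma seq_tail (r1 r2 r3 : rel E) (p : pred E) x s :
  (forall a b, r1 a b -> ~~ p a && ~~ p b) -> (forall a b, r2 a b -> p a && p b) ->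
  (forall a b, r3 a b -> ~~ p a && p b) -> p x ->
  path (fun a b => [|| r1 a b, r2 a b | r3 a b]) x s -> path r2 x s.
Proof.
move=> H1 H2 H3; elim: s x => // y s IH x px /= /andP[/or3P[r|r|r] pt].
- by case/andP: (H1 _ _ r); rewrite px.
- by rewrite r IH //; case/andP: (H2 _ _ r).
- by case/andP: (H3 _ _ r); rewrite px.
Qed.

Lemma seq_split (r1 r2 r3 : rel E) (p : pred E) x s :
  (forall a b, r1 a b -> ~~ p a && ~~ p b) -> (forall a b, r2 a b -> p a && p b) ->
  (forall a b, r3 a b -> ~~ p a && p b) -> ~~ p x -> p (last x s) ->
  path (fun a b => [|| r1 a b, r2 a b | r3 a b]) x s ->
  exists t y u, [/\ s = t ++ y :: u, path r1 x t, r3 (last x t) y & path r2 y u].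
Proof.
move=> H1 H2 H3; elim: s x => [|y s IH] x /= npx.
  by rewrite (negbTE npx).
move=> pl /andP[/or3P[r|r|r] pt].
- have [t [z [u [e a b c]]]] := IH y (proj2 (andP (H1 _ _ r))) pl pt.
  by exists (y :: t), z, u; rewrite e /= r.
- by case/andP: (H2 _ _ r); rewrite (negbTE npx).
- exists [::], y, s; split => //.
  by apply: (seq_tail H1 H2 H3) => //; case/andP: (H3 _ _ r).
Qed.

Lemma complete I (P : pattern T) x s : wf_pattern P -> all (fun v => v \in I) (x :: s) ->
  etype x = pstart P -> etype (last x s) = pend P -> path (rP P) x s ->
  matches etype etime I P (x :: s).
Proof.
elim: P x s => [a|P IH|P1 IH1 P2 IH2] x s wf allI hx hl pth.
- case: s pth hl allI => [|y s] /=.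
    by move=> _ _ /andP[? _]; exists x.
  by rewrite /rP.
- have := @plus_split (rP P)
    (fun a b => [&& etype a == pend P, etype b == pstart P & etime a < etime b])
    (fun b => etype b == pstart P) (fun a => etype a == pend P) x s.
  case.
  + by move=> a b /and3P[-> -> _].
  + by apply: sub_path pth => a b; rewrite /rP /= => /andP[/orP[f|/andP[e1 e2]] lt];
      rewrite ?f ?e1 ?e2 ?lt ?orbT.
  + by rewrite hl eqxx.
  move=> t [rest [e pt lt hr sr]].
  exists ((x :: t) :: rest); split => //.
  + move=> w wi; have aw : all (fun v => v \in I) w.
      by apply: (all_flatten wi); move: allI; rewrite e.
    move: wi aw; rewrite inE => /orP[/eqP->|/hr [y [u [-> hy ly pu]]]] aw.
      by apply: IH => //; apply/eqP.
    by apply: IH => //; apply/eqP.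
  + apply: sub_sorted sr => a b; rewrite /segrel /seg_before.
    by case: (ohead (rev a)) => // ?; case: (ohead b) => // ? /and3P[].
- move: wf; rewrite /wf_pattern /= cat_uniq => /and3P[w1 /hasPn dj w2].
  have dj' c : c \in ptypes P1 -> c \in ptypes P2 -> False.
    by move=> c1 c2; move: (dj c c2); rewrite c1.
  pose p := fun v => etype v \in ptypes P2.
  have := @seq_split (rP P1) (rP P2)
    (fun a b => [&& etype a == pend P1, etype b == pstart P2 & etime a < etime b]) p x s.
  case.
  + move=> a b /andP[/follow_in/andP[h1 h2] _]; rewrite /p.
    by apply/andP; split; apply/negP => /(dj' _ _); auto.
  + by move=> a b /andP[/follow_in/andP[h1 h2] _]; rewrite /p h1 h2.
  + move=> a b /and3P[/eqP e1 /eqP e2 _]; rewrite /p e1 e2 pstart_in andbT.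
    by apply/negP => /(dj' _ (pend_in P1)).
  + rewrite /p hx; apply/negP => /(dj' _ (pstart_in P1)); auto.
  + by rewrite /p /= hl /= pend_in.
  + apply: sub_path pth => a b; rewrite /rP /= => /andP[/or3P[f|f|/andP[e1 e2]] lt];
      by rewrite ?f ?e1 ?e2 ?lt ?orbT.
  move=> t [y [u [e p1 /and3P[/eqP l1 /eqP h2 lt] p2]]].
  move: allI; rewrite /= e all_cat /= => /and3P[xI tI /andP[yI uI]].
  exists (x :: t), (y :: u); split.
  + by [].
  + by apply: IH1 => //=; rewrite xI.
  + apply: IH2 => //=; first by rewrite yI.
    by move: hl; rewrite e last_cat.
  + rewrite /= -e; apply: sub_path pth => a b; rewrite /rP => /andP[_ ->] //.
Qed.

Lemma path_of_prop I (P : pattern T) x s : prop_path (greta_edge etype etime I P) x s -> path (rP P) x s.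
Proof.
elim: s x => //= y s IH x [[s1 [s2 m]] pp]; rewrite IH // andbT.
have [z [s' [e _ _ _ pt]]] := sound m.
case: s1 e {m} => [|w s1] /= [<- <-] in pt *.
  by case/andP: pt.
by move: pt; rewrite cat_path /= => /and3P[_ _ /andP[]].
Qed.

Lemma prop_of_matches I (P : pattern T) pre x s : matches etype etime I P (pre ++ x :: s) ->
  prop_path (greta_edge etype etime I P) x s.
Proof.
elim: s pre x => //= y s IH pre x m; split.
  by exists pre, s.
by apply: (IH (rcons pre x)); rewrite cat_rcons.
Qed.

End Aux.

Theorem theorem2 (T E : eqType) (etype : E -> T) (etime : E -> rat)
  (P : pattern T) (I : seq E) :
  wf_pattern P -> valid_stream etime I ->
  forall s : seq E,
    start_end_path etype etime I P s <-> matches etype etime I P s.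
Proof.
move=> wf _ s; split.
- case=> v0 [rest [-> hv pp hs he]].
  apply: complete => //.
  + apply/allP => v /hv [s' [m vi]].
    have [z [s'' [e a _ _ _]]] := sound m.
    by move/allP: a; apply; rewrite -?e.
  + exact: path_of_prop pp.
- move=> m; have [x [s' [e _ hx hl _]]] := sound m.
  exists x, s'; split => //.
  + by move=> v vi; exists s.
  + by apply: (@prop_of_matches _ _ _ _ _ _ [::]); rewrite -e.
Qed.
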